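(* Let $Z_2=(X_2,Y_2)$ be the planar piecewise smooth vector field with $X_2(x,y)=\left(1,\tfrac{x}{2}-4x^3\right)$ for $y\ge 0$ and $Y_2(x,y)=\left(-1,\tfrac{x}{2}-4x^3\right)$ for $y\le 0$, and let $$\Lambda_2=\left\{\left(x,\tfrac{x^2}{4}-x^4\right): -\tfrac12\le x\le \tfrac12\right\}\cup\left\{\left(x,-\left(\tfrac{x^2}{4}-x^4\right)\right): -\tfrac12\le x\le \tfrac12\right\}.$$ Then $\Lambda_2$ is a compact set invariant under $Z_2$, and the time-one map of $Z_2$ restricted to $\Lambda_2$, i.e. the map $\overline{T_1}$ on the metric space $(\overline{\Omega}_2,\rho_2)$ defined below, is topologically conjugate to the full two-sided shift on two symbols: there is a homeomorphism $h:\overline{\Omega}_2\to\{0,1\}^{\mathbb{Z}}$ with $h\circ\overline{T_1}=\sigma\circ h$.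
   Context: Switching manifold $\Sigma=\{(x,y):y=0\}=f^{-1}(0)$ with $f(x,y)=y$, $\Sigma^+=\{y\ge0\}$, $\Sigma^-=\{y\le0\}$. A planar piecewise smooth vector field (PSVF) $Z=(X,Y)$ equals the smooth field $X$ on $\Sigma^+$ and the smooth field $Y$ on $\Sigma^-$. Write $Wf(p)=\langle\nabla f(p),W(p)\rangle$, $W^2f(p)=\langle\nabla(Wf)(p),W(p)\rangle$. Regions of $\Sigma$: crossing $\Sigma^c=\{Xf\cdot Yf>0\}$, split into $\Sigma^{c+}$ ($Xf,Yf>0$) and $\Sigma^{c-}$ ($Xf,Yf<0$); sliding $\Sigma^s=\{Xf<0<Yf\}$; escaping $\Sigma^e=\{Yf<0<Xf\}$. A point $p\in\Sigma$ with $Xf(p)=0$ is a tangential singularity of $X$; it is a fold of $X$ if $X^2f(p)\neq0$, visible if $X^2f(p)>0$, invisible if $X^2f(p)<0$; for $Y$, a fold is visible if the $Y$-orbit of $p$ lies locally in $\Sigma^-$ ($Y^2f(p)<0$) and invisible otherwise. A two-fold is a fold of both $X$ and $Y$ (visible-visible if visible for both). A tangential singularity is singular if it is an invisible tangency of both $X$ and $Y$, regular otherwise. On $\overline{\Sigma^s\cup\Sigma^e}$ the sliding field is $Z^T=(Yf\,X-Xf\,Y)/(Yf-Xf)$. Local trajectories (Filippov convention): off $\Sigma$ follow $X$ (if $y>0$) or $Y$ (if $y<0$); through $p\in\Sigma^{c+}$ follow $Y$ for $t\le0$ and $X$ for $t\ge0$ (time-reversed for $\Sigma^{c-}$); through $p\in\Sigma^e$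 follow $Z^T$ for $t\le0$ and any one of $X,Y,Z^T$ for $t\ge0$ (time-reversed for $\Sigma^s$); through a regular tangential singularity follow one of the flows of $X,Y,Z^T$ for $t\le0$ and one of them for $t\ge0$; a singular tangential singularity is stationary. A global trajectory is a map $\gamma:\mathbb{R}\to\mathbb{R}^2$ obtained by concatenating orientation-preserving local trajectories $\sigma_i$ on intervals $[t_i,t_{i+1}]$, $i\in\mathbb{Z}$, with $\sigma_i(t_{i+1})=\sigma_{i+1}(t_{i+1})$ and $t_i\to\pm\infty$ as $i\to\pm\infty$. A set $\Lambda$ is invariant for $Z$ if every global trajectory $\gamma$ with $\gamma(0)\in\Lambda$ satisfies $\gamma(\mathbb{R})\subset\Lambda$. Construction: let $P(x)=\frac{x^2}{4}-x^4$, $p_1=0$. $\Omega_2$ is the set of global trajectories $\gamma$ of $Z_2$ with $\gamma(0)\in\Lambda_2$; the time-one map is $T_1:\Omega_2\to\Omega_2$, $T_1(\gamma)(t)=\gamma(t+1)$. Arcs: $I_0=\{(x,\pm P(x)): -\frac12\le x<0\}$, $I_1=\{(x,\pm P(x)): 0<x\le\frac12\}$. Itinerary $s:\Omega_2\to\{0,1\}^{\mathbb{Z}}$: $s(\gamma)_j=n$ if $\gamma(j)\in I_n$, and $s(\gamma)_j=m$ if $\gamma(j)=(0,0)$ and $\gamma(j+\frac12)\in I_m$. Set $\gamma_1\sim\gamma_2$ iff $s(\gamma_1)=s(\gamma_2)$ and $\overline{\Omega}_2=\Omega_2/\sim$. Each class $\overline\gamma$ contains a representative $\gamma^*$ with $\gamma^*(0)=(0,0)$;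 define $\rho_2(\overline{\gamma}_1,\overline{\gamma}_2)=\sum_{i\in\mathbb{Z}}2^{-|i|}d_H(\gamma_1^*([i,i+1]),\gamma_2^*([i,i+1]))$, $d_H$ the Hausdorff distance for the Euclidean metric and $\gamma_i^*$ such representatives. $\overline{T_1}(\overline\gamma)=\overline{T_1(\gamma)}$ (well defined). On $\{0,1\}^{\mathbb{Z}}$ use the product of discrete topologies and the shift $\sigma((a_j)_j)=(a_{j+1})_j$. *)

(* Defs.v *)
From Stdlib Require Import Reals Lra ZArith List ClassicalEpsilon.
From Coquelicot Require Import Coquelicot.
Open Scope R_scope.

Definition pt := (R * R)%type.
Definition vf := pt -> pt.

Definition dist2 (p q : pt) : R :=
  sqrt ((fst p - fst q) ^ 2 + (snd p - snd q) ^ 2).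

(** Switching function f(x,y) = y: grad f = (0,1). *)
Definition Wf (W : vf) (p : pt) : R := snd (W p).

Definition W2f (W : vf) (p : pt) : R :=
  Derive (fun s => Wf W (s, snd p)) (fst p) * fst (W p)
  + Derive (fun s => Wf W (fst p, s)) (snd p) * snd (W p).

Section PSVF.
Variables X Y : vf.

Definition onSigma (p : pt) : Prop := snd p = 0.
Definition crossing_plus (p : pt) : Prop := onSigma p /\ 0 < Wf X p /\ 0 < Wf Y p.
Definition crossing_minus (p : pt) : Prop := onSigma p /\ Wf X p < 0 /\ Wf Y p < 0.
Definition sliding (p : pt) : Prop := onSigma p /\ Wf X p < 0 /\ 0 < Wf Y p.
Definition escaping (p : pt) : Prop := onSigma p /\ Wf Y p < 0 /\ 0 < Wf X p.

Definition tangential (p : pt) : Prop := onSigma p /\ (Wf X p = 0 \/ Wf Y p = 0).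
Definition invisible_X (p : pt) : Prop := onSigma p /\ Wf X p = 0 /\ W2f X p < 0.
Definition invisible_Y (p : pt) : Prop := onSigma p /\ Wf Y p = 0 /\ 0 < W2f Y p.
Definition singular_tang (p : pt) : Prop := invisible_X p /\ invisible_Y p.
Definition regular_tang (p : pt) : Prop := tangential p /\ ~ singular_tang p.

Definition ZT (p : pt) : pt :=
  ((Wf Y p * fst (X p) - Wf X p * fst (Y p)) / (Wf Y p - Wf X p),
   (Wf Y p * snd (X p) - Wf X p * snd (Y p)) / (Wf Y p - Wf X p)).

Definition SE_closure (p : pt) : Prop :=
  forall eps, 0 < eps -> exists q, (sliding q \/ escaping q) /\ dist2 p q < eps.
End PSVF.

Definition cont_on (phi : R -> pt) (a b : R) : Prop :=
  forall t, a <= t <= b -> forall eps, 0 < eps -> exists delta, 0 < delta /\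
    forall s, a <= s <= b -> Rabs (s - t) < delta -> dist2 (phi s) (phi t) < eps.

Definition solves (W : vf) (phi : R -> pt) (a b : R) : Prop :=
  cont_on phi a b /\
  forall t, a < t < b ->
    is_derive (fun s => fst (phi s)) t (fst (W (phi t))) /\
    is_derive (fun s => snd (phi s)) t (snd (W (phi t))).

Inductive flowkind := KX | KY | KT.

Definition piece (X Y : vf) (k : flowkind) (phi : R -> pt) (a b : R) : Prop :=
  match k with
  | KX => solves X phi a b /\ forall t, a <= t <= b -> 0 <= snd (phi t)
  | KY => solves Y phi a b /\ forall t, a <= t <= b -> snd (phi t) <= 0
  | KT => solves (ZT X Y) phi a b /\ forall t, a <= t <= b -> SE_closure X Y (phi t)
  end.

(** admissible (backward, forward) flows through p (Filippov convention) *)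
Definition allowed (X Y : vf) (p : pt) (k1 k2 : flowkind) : Prop :=
  (0 < snd p /\ k1 = KX /\ k2 = KX) \/
  (snd p < 0 /\ k1 = KY /\ k2 = KY) \/
  (crossing_plus X Y p /\ k1 = KY /\ k2 = KX) \/
  (crossing_minus X Y p /\ k1 = KX /\ k2 = KY) \/
  (escaping X Y p /\ k1 = KT) \/
  (sliding X Y p /\ k2 = KT) \/
  regular_tang X Y p.

Definition local_traj (X Y : vf) (phi : R -> pt) (p : pt) (a b : R) : Prop :=
  a <= 0 <= b /\ phi 0 = p /\
  ((singular_tang X Y p /\ forall t, a <= t <= b -> phi t = p) \/
   (~ singular_tang X Y p /\ exists k1 k2,
       piece X Y k1 phi a 0 /\ piece X Y k2 phi 0 b /\ allowed X Y p k1 k2)).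

Definition global_traj (X Y : vf) (gamma : R -> pt) : Prop :=
  exists (t : Z -> R) (sigma : Z -> R -> pt),
    (forall i, t i < t (i + 1)%Z) /\
    (forall M, exists i, M < t i) /\ (forall M, exists i, t i < M) /\
    (forall i, exists tau, t i <= tau <= t (i + 1)%Z /\
        local_traj X Y (fun s => sigma i (s + tau)) (sigma i tau)
                   (t i - tau) (t (i + 1)%Z - tau)) /\
    (forall i, sigma i (t (i + 1)%Z) = sigma (i + 1)%Z (t (i + 1)%Z)) /\
    (forall i s, t i <= s <= t (i + 1)%Z -> gamma s = sigma i s).

Definition invariant (X Y : vf) (L : pt -> Prop) : Prop :=
  forall gamma, global_traj X Y gamma -> L (gamma 0) -> forall t, L (gamma t).

Definition open2 (U : pt -> Prop) : Prop :=
  forall p, U p -> exists eps, 0 < eps /\ forall q, dist2 p q < eps -> U q.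
Definition compact2 (K : pt -> Prop) : Prop :=
  forall (I : Type) (U : I -> pt -> Prop), (forall i, open2 (U i)) ->
    (forall p, K p -> exists i, U i p) ->
    exists l : list I, forall p, K p -> exists i, In i l /\ U i p.

Definition P (x : R) : R := x ^ 2 / 4 - x ^ 4.
Definition X2 : vf := fun p => (1, fst p / 2 - 4 * fst p ^ 3).
Definition Y2 : vf := fun p => (-1, fst p / 2 - 4 * fst p ^ 3).

Definition Lambda2 (p : pt) : Prop :=
  -1/2 <= fst p <= 1/2 /\ (snd p = P (fst p) \/ snd p = - P (fst p)).

Definition I0 (p : pt) : Prop :=
  -1/2 <= fst p < 0 /\ (snd p = P (fst p) \/ snd p = - P (fst p)).
Definition I1 (p : pt) : Prop :=
  0 < fst p <= 1/2 /\ (snd p = P (fst p) \/ snd p = - P (fst p)).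

Definition origin : pt := (0, 0).

Definition Omega2 (gamma : R -> pt) : Prop :=
  global_traj X2 Y2 gamma /\ Lambda2 (gamma 0).

Definition T1 (gamma : R -> pt) : R -> pt := fun t => gamma (t + 1).

(** itinerary; the symbol 0 is [false], 1 is [true] *)
Definition itin (gamma : R -> pt) (j : Z) : bool :=
  if excluded_middle_informative
       (I1 (gamma (IZR j)) \/
        (gamma (IZR j) = origin /\ I1 (gamma (IZR j + 1/2))))
  then true else false.

Definition cls (gamma : R -> pt) : (R -> pt) -> Prop :=
  fun g => Omega2 g /\ itin g = itin gamma.

Definition IsClass (S : (R -> pt) -> Prop) : Prop :=
  exists gamma, Omega2 gamma /\ S = cls gamma.

Definition OmegaBar := { S : (R -> pt) -> Prop | IsClass S }.

Definition rep0 (c : OmegaBar) : R -> pt :=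
  epsilon (inhabits (fun _ : R => origin))
          (fun g => proj1_sig c g /\ g 0 = origin).

Definition dpt (p : pt) (B : pt -> Prop) : R :=
  real (Glb_Rbar (fun r => exists b, B b /\ r = dist2 p b)).
Definition hsemi (A B : pt -> Prop) : R :=
  real (Lub_Rbar (fun r => exists a, A a /\ r = dpt a B)).
Definition dH (A B : pt -> Prop) : R := Rmax (hsemi A B) (hsemi B A).

Definition img (gamma : R -> pt) (i : Z) : pt -> Prop :=
  fun p => exists s, IZR i <= s <= IZR i + 1 /\ p = gamma s.

Definition dterm (c1 c2 : OmegaBar) (i : Z) : R :=
  dH (img (rep0 c1) i) (img (rep0 c2) i).

(** rho2 = sum_{i in Z} 2^{-|i|} d_H(...) split as i >= 0 and i <= -1 *)
Definition rho2 (c1 c2 : OmegaBar) : R :=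
  Series (fun n => (/2) ^ n * dterm c1 c2 (Z.of_nat n)) +
  Series (fun n => (/2) ^ (S n) * dterm c1 c2 (- Z.of_nat (S n))%Z).

Definition shift2 (a : Z -> bool) : Z -> bool := fun j => a (j + 1)%Z.

(** continuity for rho2 on OmegaBar and the product (of discrete) topology *)
Definition cont_to_seq (h : OmegaBar -> Z -> bool) : Prop :=
  forall c (N : nat), exists delta, 0 < delta /\
    forall c', rho2 c c' < delta ->
      forall j, (Z.abs j <= Z.of_nat N)%Z -> h c' j = h c j.
Definition cont_from_seq (g : (Z -> bool) -> OmegaBar) : Prop :=
  forall a eps, 0 < eps -> exists N : nat,
    forall b, (forall j, (Z.abs j <= Z.of_nat N)%Z -> b j = a j) ->
      rho2 (g a) (g b) < eps.

Definition homeomorphism (h : OmegaBar -> Z -> bool) : Prop :=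
  exists g : (Z -> bool) -> OmegaBar,
    (forall c, g (h c) = c) /\ (forall a, h (g a) = a) /\
    cont_to_seq h /\ cont_from_seq g.

(* Main.v *)
Require Import Defs.
From Stdlib Require Import Reals ZArith.
From Coquelicot Require Import Coquelicot.
From Stdlib Require Import Lra Lia List ClassicalEpsilon Classical FunctionalExtensionality PropExtensionality ProofIrrelevance.
Open Scope R_scope.

Lemma P_nonneg_bound x : 0 <= P x -> -1/2 <= x <= 1/2.
Proof.
  unfold P; intros H.
  assert (H1 : x^2 * (1/4 - x^2) >= 0) by (ring_simplify; lra).
  destruct (Rle_dec (x^2) (1/4)).
  - split; nra.
  - assert (x^2 > 0) by lra. nra.
Qed.

Lemma P_bound_nonneg x : -1/2 <= x <= 1/2 -> 0 <= P x.
Proof. unfold P; intros H. assert (x*x <= 1/4) by nra.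
  replace (x^2/4 - x^4) with ((x*x) * (1/4 - x*x)) by field. apply Rmult_le_pos; nra. Qed.

Lemma P_even x : P (- x) = P x.
Proof. unfold P; field. Qed.

Lemma P0 : P 0 = 0.
Proof. unfold P; field. Qed.

Lemma Phalf : P (1/2) = 0.
Proof. unfold P; field. Qed.
Lemma Pmhalf : P (-(1/2)) = 0.
Proof. unfold P; field. Qed.

Lemma P_zero x : P x = 0 -> x = 0 \/ x = 1/2 \/ x = -(1/2).
Proof.
  unfold P; intros H.
  assert (H1 : (x * x) * ((x - 1/2) * (x + 1/2)) = 0) by (replace ((x * x) * ((x - 1/2) * (x + 1/2))) with (-(x^2/4 - x^4)) by field; rewrite H; ring).
  destruct (Rmult_integral _ _ H1) as [H2|H2].
  - left. destruct (Rmult_integral _ _ H2); auto.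
  - destruct (Rmult_integral _ _ H2); [right;left|right;right]; lra.
Qed.

Lemma Lambda_bound p : Lambda2 p -> -1/2 <= fst p <= 1/2.
Proof. intros [H _]; exact H. Qed.

Lemma Lambda_up p : Lambda2 p -> 0 <= snd p -> snd p = P (fst p).
Proof.
  intros [Hb [H|H]] Hs; auto.
  pose proof (P_bound_nonneg _ Hb). lra.
Qed.

Lemma Lambda_down p : Lambda2 p -> snd p <= 0 -> snd p = - P (fst p).
Proof.
  intros [Hb [H|H]] Hs; auto.
  pose proof (P_bound_nonneg _ Hb). lra.
Qed.

Lemma P_zero_shift x : -1/2 <= x <= 1/2 -> P x = 0 -> exists m : Z, - x = x + IZR m.
Proof.
  intros Hb H. destruct (P_zero _ H) as [->|[->| ->]].
  - exists 0%Z. simpl. ring.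
  - exists (-1)%Z. simpl. lra.
  - exists 1%Z. simpl. lra.
Qed.

Definition PH (p : pt) (s : R) : Prop :=
  Lambda2 p /\
  ((snd p = P (fst p) /\ exists k : Z, s = fst p + IZR k) \/
   (snd p = - P (fst p) /\ exists k : Z, s = - fst p + IZR k)).

Lemma PH_upper p w : PH p w -> snd p = P (fst p) -> exists K : Z, fst p = w - IZR K.
Proof.
  intros [HL [[_ [k Hk]]|[Hs [k Hk]]]] Hu.
  - exists k. lra.
  - assert (P (fst p) = 0) by lra.
    destruct (P_zero_shift _ (Lambda_bound _ HL) H) as [m Hm].
    exists (k + m)%Z. rewrite plus_IZR. lra.
Qed.

Lemma PH_lower p w : PH p w -> snd p = - P (fst p) -> exists K : Z, fst p = - w + IZR K.
Proof.
  intros [HL [[Hs [k Hk]]|[_ [k Hk]]]] Hu.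
  - assert (P (fst p) = 0) by lra.
    destruct (P_zero_shift _ (Lambda_bound _ HL) H) as [m Hm].
    exists (k - m)%Z. rewrite minus_IZR. lra.
  - exists k. lra.
Qed.

Lemma PH_arc_up p q s d : PH p s -> Lambda2 q -> snd p = P (fst p) -> snd q = P (fst q) ->
  fst q = fst p + d -> PH q (s + d).
Proof.
  intros Hp Hq Hsp Hsq Hx. destruct (PH_upper _ _ Hp Hsp) as [K HK].
  split; auto. left. split; auto. exists K. lra.
Qed.

Lemma PH_arc_down p q s d : PH p s -> Lambda2 q -> snd p = - P (fst p) -> snd q = - P (fst q) ->
  fst q = fst p - d -> PH q (s + d).
Proof.
  intros Hp Hq Hsp Hsq Hx. destruct (PH_lower _ _ Hp Hsp) as [K HK].
  split; auto. right. split; auto. exists K. lra.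
Qed.

Lemma PH_Lambda p s : PH p s -> Lambda2 p.
Proof. intros [H _]; exact H. Qed.

Lemma PH_eq p s s' : s = s' -> PH p s -> PH p s'.
Proof. intros ->; auto. Qed.

Definition cl (a b s : R) := Rmax a (Rmin b s).
Lemma cl_in a b s : a <= b -> a <= cl a b s <= b.
Proof. unfold cl, Rmax, Rmin; intros; repeat destruct Rle_dec; lra. Qed.
Lemma cl_id a b s : a <= s <= b -> cl a b s = s.
Proof. unfold cl, Rmax, Rmin; intros; repeat destruct Rle_dec; lra. Qed.
Lemma cl_lip a b s x : a <= b -> Rabs (cl a b s - cl a b x) <= Rabs (s - x).
Proof. unfold cl, Rmax, Rmin; intros; repeat destruct Rle_dec; split_Rabs; lra. Qed.

Lemma loc_of (x : R) (Q : R -> Prop) d : 0 < d -> (forall y, Rabs (y - x) < d -> Q y) -> locally x Q.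
Proof. intros Hd H. exists (mkposreal d Hd). intros y Hy. apply H. exact Hy. Qed.

Lemma loc_in a b t : a < t < b -> locally t (fun s => a < s < b).
Proof.
  intros Ht. apply (loc_of _ _ (Rmin (t - a) (b - t))).
  - apply Rmin_glb_lt; lra.
  - intros y Hy. pose proof (Rmin_l (t-a) (b-t)). pose proof (Rmin_r (t-a) (b-t)).
    split_Rabs; lra.
Qed.

Lemma fst_le_dist p q : Rabs (fst p - fst q) <= dist2 p q.
Proof.
  unfold dist2. rewrite <- sqrt_Rsqr_abs. apply sqrt_le_1_alt. unfold Rsqr.
  assert (0 <= (snd p - snd q)^2) by (apply pow2_ge_0). simpl. lra.
Qed.
Lemma snd_le_dist p q : Rabs (snd p - snd q) <= dist2 p q.
Proof.
  unfold dist2. rewrite <- sqrt_Rsqr_abs. apply sqrt_le_1_alt. unfold Rsqr.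
  assert (0 <= (fst p - fst q)^2) by (apply pow2_ge_0). simpl. lra.
Qed.

Lemma cont_cl_fst phi a b : a <= b -> cont_on phi a b ->
  forall x, continuity_pt (fun s => fst (phi (cl a b s))) x.
Proof.
  intros Hab Hc x. apply continuity_pt_locally. intros eps.
  destruct (Hc (cl a b x) (cl_in a b x Hab) eps (cond_pos eps)) as [d [Hd Hd']].
  apply (loc_of _ _ d Hd). intros y Hy.
  eapply Rle_lt_trans. apply fst_le_dist. apply Hd'. apply cl_in; auto.
  eapply Rle_lt_trans. apply cl_lip; auto. auto.
Qed.
Lemma cont_cl_snd phi a b : a <= b -> cont_on phi a b ->
  forall x, continuity_pt (fun s => snd (phi (cl a b s))) x.
Proof.
  intros Hab Hc x. apply continuity_pt_locally. intros eps.
  destruct (Hc (cl a b x) (cl_in a b x Hab) eps (cond_pos eps)) as [d [Hd Hd']].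
  apply (loc_of _ _ d Hd). intros y Hy.
  eapply Rle_lt_trans. apply snd_le_dist. apply Hd'. apply cl_in; auto.
  eapply Rle_lt_trans. apply cl_lip; auto. auto.
Qed.
Lemma cont_cl a b : a <= b -> forall x, continuity_pt (cl a b) x.
Proof.
  intros Hab x. apply continuity_pt_locally. intros eps.
  apply (loc_of _ _ eps (cond_pos eps)). intros y Hy.
  eapply Rle_lt_trans. apply cl_lip; auto. auto.
Qed.

Lemma zero_deriv h a b : a <= b -> (forall x, continuity_pt h x) ->
  (forall t, a < t < b -> is_derive h t 0) -> forall t, a <= t <= b -> h t = h a.
Proof.
  intros Hab Hc Hd t Ht. destruct (Req_dec t a) as [->|Hne]; auto.
  destruct (MVT_gen h a t (fun _ => 0)) as [c [_ Hcc]].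
  - intros x Hx. rewrite Rmin_left in Hx by lra. rewrite Rmax_right in Hx by lra.
    apply Hd. lra.
  - intros x _. apply Hc.
  - lra.
Qed.

Lemma is_derive_Rminus f g x df dg : is_derive f x df -> is_derive g x dg ->
  is_derive (fun s => f s - g s) x (df - dg).
Proof. intros; apply @is_derive_minus; auto. Qed.

Lemma cont_of_derive (f : R -> R) x : ex_derive f x -> continuity_pt f x.
Proof. intros H. apply continuity_pt_filterlim. apply (@ex_derive_continuous R_AbsRing R_NormedModule). auto. Qed.

Lemma solves_form (W : vf) sg phi a b :
  (forall p, fst (W p) = sg) -> (forall p, snd (W p) = fst p / 2 - 4 * fst p ^ 3) -> sg * sg = 1 ->
  a <= b -> solves W phi a b -> forall t, a <= t <= b ->
  fst (phi t) = fst (phi a) + sg * (t - a) /\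
  snd (phi t) = sg * P (fst (phi t)) + (snd (phi a) - sg * P (fst (phi a))).
Proof.
  intros HW1 HW2 Hsg Hab [Hc Hd].
  set (x0 := fst (phi a)).
  assert (Hx : forall t, a <= t <= b -> fst (phi t) = x0 + sg * (t - a)).
  { set (h := fun s => fst (phi (cl a b s)) - sg * cl a b s).
    assert (Hh : forall t, a <= t <= b -> h t = h a).
    { apply zero_deriv; auto.
      - intros x. apply continuity_pt_minus. apply cont_cl_fst; auto.
        apply (continuity_pt_scal (cl a b) sg x). apply cont_cl; auto.
      - intros t Ht. apply (is_derive_ext_loc (fun s => fst (phi s) - sg * s)).
        + apply (filter_imp (fun s => a < s < b)). 2: apply loc_in; auto.
          intros s Hs. unfold h. rewrite cl_id; auto. lra.
        + replace 0 with (sg - sg * 1) by ring. apply is_derive_Rminus.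
          * rewrite <- (HW1 (phi t)). apply Hd; auto.
          * auto_derive; auto; ring. }
    intros t Ht. pose proof (Hh t Ht). unfold h in H. rewrite !cl_id in H by lra.
    unfold x0. lra. }
  set (h := fun s => snd (phi (cl a b s)) - sg * P (x0 + sg * (cl a b s - a))).
  assert (Hh : forall t, a <= t <= b -> h t = h a).
  { apply zero_deriv; auto.
    - intros x. apply continuity_pt_minus. apply cont_cl_snd; auto.
      apply (continuity_pt_comp (cl a b) (fun u => sg * P (x0 + sg * (u - a)))).
      apply cont_cl; auto. apply cont_of_derive. unfold P. auto_derive. auto.
    - intros t Ht. apply (is_derive_ext_loc (fun s => snd (phi s) - sg * P (x0 + sg * (s - a)))).
      + apply (filter_imp (fun s => a < s < b)). 2: apply loc_in; auto.
        intros s Hs. unfold h. rewrite cl_id; auto. lra.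
      + set (y := x0 + sg * (t - a)).
        replace 0 with ((y / 2 - 4 * y ^ 3) - sg * ((y / 2 - 4 * y ^ 3) * sg)).
        2: { transitivity ((y / 2 - 4 * y ^ 3) * (1 - sg * sg)). ring. rewrite Hsg. ring. }
        apply is_derive_Rminus.
        * unfold y. rewrite <- Hx by lra. rewrite <- HW2. apply Hd; auto.
        * unfold P. auto_derive. auto. unfold y. field. }
  intros t Ht. split. apply Hx; auto.
  pose proof (Hh t Ht). unfold h in H. rewrite !cl_id in H by lra.
  rewrite <- Hx in H by lra. replace (x0 + sg * (a - a)) with x0 in H by ring.
  unfold x0 in *. lra.
Qed.

Lemma no_KT phi a b : a <= b -> ~ piece X2 Y2 KT phi a b.
Proof.
  intros Hab [_ H].
  destruct (H a (conj (Rle_refl a) Hab) 1 Rlt_0_1) as [q [[[_ [H1 H2]]|[_ [H1 H2]]] _]];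
  unfold Wf, X2, Y2 in *; simpl in *; lra.
Qed.

Lemma piece_arc k phi a b : a <= b -> piece X2 Y2 k phi a b ->
  forall t0, a <= t0 <= b -> Lambda2 (phi t0) ->
  exists sg, (sg = 1 \/ sg = -1) /\ forall t, a <= t <= b ->
   Lambda2 (phi t) /\ fst (phi t) = fst (phi t0) + sg * (t - t0) /\ snd (phi t) = sg * P (fst (phi t)).
Proof.
  intros Hab Hp t0 Ht0 HL. destruct k.
  - destruct Hp as [Hs Hy].
    assert (F := solves_form X2 1 phi a b (fun _ => eq_refl) (fun _ => eq_refl) ltac:(ring) Hab Hs).
    exists 1. split; [left; auto|].
    destruct (F t0 Ht0) as [Fx0 Fy0].
    pose proof (Lambda_up _ HL (Hy t0 Ht0)) as Hu.
    intros t Ht. destruct (F t Ht) as [Fx Fy].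
    assert (Hsy : snd (phi t) = P (fst (phi t))) by lra.
    split; [|split; lra].
    split. apply P_nonneg_bound. rewrite <- Hsy. apply Hy; auto. left; auto.
  - destruct Hp as [Hs Hy].
    assert (F := solves_form Y2 (-1) phi a b (fun _ => eq_refl) (fun _ => eq_refl) ltac:(ring) Hab Hs).
    exists (-1). split; [right; auto|].
    destruct (F t0 Ht0) as [Fx0 Fy0].
    pose proof (Lambda_down _ HL (Hy t0 Ht0)) as Hu.
    intros t Ht. destruct (F t Ht) as [Fx Fy].
    assert (Hsy : snd (phi t) = - P (fst (phi t))) by lra.
    split; [|split; lra].
    split. apply P_nonneg_bound. pose proof (Hy t Ht). lra. right; auto.
  - exfalso. eapply no_KT; eauto.
Qed.

Lemma piece_PH k phi a b : a <= b -> piece X2 Y2 k phi a b ->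
  forall t0 t, a <= t0 <= b -> a <= t <= b -> forall s, PH (phi t0) s -> PH (phi t) (s + (t - t0)).
Proof.
  intros Hab Hp t0 t Ht0 Ht s Hs.
  destruct (piece_arc k phi a b Hab Hp t0 Ht0 (PH_Lambda _ _ Hs)) as [sg [[->| ->] Ha]];
  destruct (Ha t Ht) as [HLt [Hxt Hyt]]; destruct (Ha t0 Ht0) as [HL0 [Hx0 Hy0]].
  - apply (PH_arc_up (phi t0)); auto; lra.
  - apply (PH_arc_down (phi t0)); auto; lra.
Qed.

Lemma Derive_P' x : Derive (fun s => s / 2 - 4 * s ^ 3) x = 1 / 2 - 12 * x ^ 2.
Proof. apply is_derive_unique. auto_derive. auto. field. Qed.

Lemma not_singular p : Lambda2 p -> ~ singular_tang X2 Y2 p.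
Proof.
  intros HL [[Hs [Hw HX]] _]. unfold onSigma in Hs.
  assert (HP : P (fst p) = 0).
  { destruct HL as [_ [H|H]]; lra. }
  destruct p as [x y]; simpl in *. subst y.
  unfold Wf, X2 in Hw; simpl in Hw.
  destruct (P_zero _ HP) as [->|[->| ->]]; try (field_simplify in Hw; lra).
  unfold W2f, Wf, X2 in HX; cbn [fst snd] in HX.
  rewrite Derive_P' in HX. rewrite Derive_const in HX. lra.
Qed.

Lemma local_PH phi p a b : local_traj X2 Y2 phi p a b ->
  forall t0 t, a <= t0 <= b -> a <= t <= b -> forall s, PH (phi t0) s -> PH (phi t) (s + (t - t0)).
Proof.
  intros [Ha [H0 [[Hsing Hconst]|[Hns [k1 [k2 [Hp1 [Hp2 _]]]]]]]] t0 t Ht0 Ht s Hs.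
  - exfalso. apply (not_singular p); auto. rewrite <- (Hconst t0 Ht0). eapply PH_Lambda; eauto.
  - assert (Ha0 : a <= 0) by lra. assert (H0b : 0 <= b) by lra.
    destruct (Rle_dec t0 0); destruct (Rle_dec t 0).
    + apply (piece_PH k1 phi a 0); auto; lra.
    + assert (H1 := piece_PH k1 phi a 0 Ha0 Hp1 t0 0 ltac:(lra) ltac:(lra) s Hs).
      assert (H2 := piece_PH k2 phi 0 b H0b Hp2 0 t ltac:(lra) ltac:(lra) _ H1).
      eapply PH_eq; [|exact H2]. ring.
    + assert (H1 := piece_PH k2 phi 0 b H0b Hp2 t0 0 ltac:(lra) ltac:(lra) s Hs).
      assert (H2 := piece_PH k1 phi a 0 Ha0 Hp1 0 t ltac:(lra) ltac:(lra) _ H1).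
      eapply PH_eq; [|exact H2]. ring.
    + apply (piece_PH k2 phi 0 b); auto; lra.
Qed.

Section Chain.
Variable t : Z -> R.
Hypothesis Hinc : forall i, t i < t (i + 1)%Z.

Lemma mono_nat : forall n i, t i <= t (i + Z.of_nat n)%Z.
Proof.
  induction n; intros i. rewrite Z.add_0_r; lra.
  rewrite Nat2Z.inj_succ. replace (i + Z.succ (Z.of_nat n))%Z with ((i + Z.of_nat n) + 1)%Z by lia.
  specialize (IHn i); specialize (Hinc (i + Z.of_nat n)%Z); lra.
Qed.
Lemma mono i j : (i <= j)%Z -> t i <= t j.
Proof. intros H. replace j with (i + Z.of_nat (Z.to_nat (j - i)))%Z by lia. apply mono_nat. Qed.

Hypothesis Hup : forall M, exists i, M < t i.
Hypothesis Hdown : forall M, exists i, t i < M.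

Lemma locate s : exists i, t i <= s <= t (i + 1)%Z.
Proof.
  destruct (Hdown s) as [i1 H1]. destruct (Hup s) as [i2 H2].
  assert (H : forall n i, t i <= s -> s < t (i + Z.of_nat n)%Z -> exists j, t j <= s <= t (j+1)%Z).
  { induction n; intros i Hi Hs. rewrite Z.add_0_r in Hs; lra.
    destruct (Rle_dec s (t (i+1)%Z)). exists i; split; lra.
    apply (IHn (i+1)%Z). lra. replace (i + 1 + Z.of_nat n)%Z with (i + Z.of_nat (S n))%Z by lia. auto. }
  assert (i1 < i2)%Z. { destruct (Z_lt_le_dec i1 i2); auto. pose proof (mono i2 i1 l). lra. }
  apply (H (Z.to_nat (i2 - i1)) i1). lra.
  replace (i1 + Z.of_nat (Z.to_nat (i2 - i1)))%Z with i2 by lia. auto.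
Qed.

Lemma chain_fwd (G : R -> Prop) u v :
  (forall i a b, t i <= a <= t (i+1)%Z -> t i <= b <= t (i+1)%Z -> u <= a <= v -> u <= b <= v -> G a -> G b) ->
  G u -> forall w, u <= w <= v -> G w.
Proof.
  intros Step Gu.
  destruct (locate u) as [i Hi].
  assert (K : forall n w, u <= w <= v -> w <= t (i + 1 + Z.of_nat n)%Z -> G w).
  { induction n; intros w Hw Hwt.
    - rewrite Z.add_0_r in Hwt. apply (Step i u w); auto; lra.
    - destruct (Rle_dec w (t (i + 1 + Z.of_nat n)%Z)). apply IHn; auto.
      set (m := t (i + 1 + Z.of_nat n)%Z).
      assert (u <= m). { unfold m. pose proof (mono (i+1) (i+1+Z.of_nat n)%Z ltac:(lia)). lra. }
      assert (Hnm : m < w) by (apply Rnot_le_lt; exact n0).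
      assert (G m). { apply IHn. lra. unfold m; lra. }
      apply (Step (i + 1 + Z.of_nat n)%Z m w).
      + pose proof (Hinc (i + 1 + Z.of_nat n)%Z). unfold m; lra.
      + split. unfold m; lra.
        replace (i + 1 + Z.of_nat n + 1)%Z with (i + 1 + Z.of_nat (S n))%Z by lia. lra.
      + lra.
      + lra.
      + auto. }
  intros w Hw. destruct (Hup w) as [j Hj].
  apply (K (Z.to_nat (j - (i+1))) w Hw).
  pose proof (mono j (i + 1 + Z.of_nat (Z.to_nat (j - (i + 1))))%Z ltac:(lia)). lra.
Qed.

Lemma chain_any (G : R -> Prop) u v :
  (forall i a b, t i <= a <= t (i+1)%Z -> t i <= b <= t (i+1)%Z -> u <= a <= v -> u <= b <= v -> G a -> G b) ->
  forall w0, u <= w0 <= v -> G w0 -> forall w, u <= w <= v -> G w.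
Proof.
  intros Step w0 Hw0 G0 w Hw.
  destruct (Rle_dec w0 w).
  - apply (chain_fwd G w0 v); auto. intros i a b Ha Hb Ha' Hb' Ga. apply (Step i a b); auto; lra. lra.
  - apply NNPP; intro Hn.
    assert (H : forall w', w <= w' <= w0 -> ~ G w').
    { apply (chain_fwd (fun x => ~ G x) w w0); auto.
      intros i a b Ha Hb Ha' Hb' Ga Gb. apply Ga. apply (Step i b a); auto; lra. }
    apply (H w0); auto. lra.
Qed.
End Chain.

Lemma global_PH gamma : global_traj X2 Y2 gamma ->
  forall t0 s, PH (gamma t0) s -> forall t, PH (gamma t) (s + (t - t0)).
Proof.
  intros [tt [sigma [Hinc [Hup [Hdown [Hloc [Hj Heq]]]]]]] t0 s Hs t.
  apply (chain_any tt Hinc Hup Hdown (fun w => PH (gamma w) (s + (w - t0))) (Rmin t0 t) (Rmax t0 t))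
    with (w0 := t0).
  - intros i a b Ha Hb _ _ Ga.
    destruct (Hloc i) as [tau [Htau HL]].
    pose proof (local_PH _ _ _ _ HL (a - tau) (b - tau) ltac:(lra) ltac:(lra)) as K.
    cbv beta in K.
    replace (a - tau + tau) with a in K by ring. replace (b - tau + tau) with b in K by ring.
    rewrite <- !(Heq i) in K by auto. specialize (K _ Ga).
    eapply PH_eq; [|apply K]. ring.
  - split; [apply Rmin_l|apply Rmax_l].
  - eapply PH_eq; [|exact Hs]. ring.
  - split; [apply Rmin_r|apply Rmax_r].
Qed.

Lemma Lambda_PH p : Lambda2 p -> exists s, PH p s.
Proof.
  intros HL. destruct HL as [Hb [H|H]] eqn:E.
  - exists (fst p). split; auto. left. split; auto. exists 0%Z. simpl; ring.
  - exists (- fst p). split; auto. right. split; auto. exists 0%Z. simpl; ring.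
Qed.

Lemma invariance : invariant X2 Y2 Lambda2.
Proof.
  intros gamma Hg H0 t. destruct (Lambda_PH _ H0) as [s Hs].
  eapply PH_Lambda. apply (global_PH gamma Hg 0 s Hs t).
Qed.

Definition cand (b : bool) (u : R) : pt :=
  if b then (if Rle_dec u (1/2) then (u, P u) else (1 - u, - P (1 - u)))
  else (if Rle_dec u (1/2) then (- u, - P u) else (u - 1, P (u - 1))).

Lemma cand_lo_t u : u <= 1/2 -> cand true u = (u, P u).
Proof. intros H. unfold cand. destruct Rle_dec; [auto|lra]. Qed.
Lemma cand_lo_f u : u <= 1/2 -> cand false u = (- u, - P u).
Proof. intros H. unfold cand. destruct Rle_dec; [auto|lra]. Qed.
Lemma cand_hi_t u : 1/2 <= u -> cand true u = (1 - u, - P (1 - u)).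
Proof.
  intros H. unfold cand. destruct Rle_dec; auto.
  assert (u = 1/2) by lra. subst. replace (1 - 1/2) with (1/2) by field. rewrite Phalf. f_equal. ring.
Qed.
Lemma cand_hi_f u : 1/2 <= u -> cand false u = (u - 1, P (u - 1)).
Proof.
  intros H. unfold cand. destruct Rle_dec; auto.
  assert (u = 1/2) by lra. subst. replace (1/2 - 1) with (-(1/2)) by field. rewrite Pmhalf, Phalf.
  f_equal; field.
Qed.
Lemma cand_0 b : cand b 0 = origin.
Proof. destruct b; [rewrite cand_lo_t|rewrite cand_lo_f]; try lra; rewrite ?P0; unfold origin; f_equal; ring. Qed.
Lemma cand_1 b : cand b 1 = origin.
Proof.
  destruct b; [rewrite cand_hi_t|rewrite cand_hi_f]; try lra; unfold origin;
  replace (1 - 1) with 0 by ring; rewrite ?P0; f_equal; ring.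
Qed.
Lemma cand_pos_t u : 0 < u < 1 -> 0 < fst (cand true u).
Proof. intros H. destruct (Rle_dec u (1/2)); [rewrite cand_lo_t|rewrite cand_hi_t]; simpl; lra. Qed.
Lemma cand_neg_f u : 0 < u < 1 -> fst (cand false u) < 0.
Proof. intros H. destruct (Rle_dec u (1/2)); [rewrite cand_lo_f|rewrite cand_hi_f]; simpl; lra. Qed.

Lemma int_lt_succ (K j : Z) : IZR K < IZR j + 1 -> IZR K <= IZR j.
Proof. intros H. assert (K < j + 1)%Z by (apply lt_IZR; rewrite plus_IZR; simpl; lra). apply IZR_le; lia. Qed.
Lemma int_gt (K j : Z) : IZR j < IZR K -> IZR j + 1 <= IZR K.
Proof. intros H. assert (j < K)%Z by (apply lt_IZR; lra). replace (IZR j + 1) with (IZR (j + 1)) by (rewrite plus_IZR; auto). apply IZR_le; lia. Qed.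

Lemma PH_cand p (j : Z) u : PH p (IZR j + u) -> 0 <= u <= 1 -> p = cand true u \/ p = cand false u.
Proof.
  intros [HL [[Hu [k Hk]]|[Hd [k Hk]]]] Hu01; pose proof (Lambda_bound _ HL) as Hb;
  destruct p as [x y]; cbn [fst snd] in *.
  - assert (Hx : x = u + IZR (j - k)) by (rewrite minus_IZR; lra).
    assert (j - k < 1)%Z by (apply lt_IZR; simpl; lra).
    assert (-2 < j - k)%Z by (apply lt_IZR; simpl; lra).
    destruct (Z.eq_dec (j - k) 0) as [E|E].
    + rewrite E in Hx; simpl in Hx. left. rewrite cand_lo_t by lra.
      assert (x = u) by lra. clear Hx. subst x y. reflexivity.
    + assert (E' : (j - k = -1)%Z) by lia. rewrite E' in Hx; simpl in Hx.
      right. rewrite cand_hi_f by lra. assert (x = u - 1) by lra. clear Hx. subst x y. reflexivity.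
  - assert (Hx : x = - u + IZR (k - j)) by (rewrite minus_IZR; lra).
    assert (k - j < 2)%Z by (apply lt_IZR; simpl; lra).
    assert (-1 < k - j)%Z by (apply lt_IZR; simpl; lra).
    destruct (Z.eq_dec (k - j) 0) as [E|E].
    + rewrite E in Hx; simpl in Hx. right. rewrite cand_lo_f by lra.
      assert (x = - u) by lra. clear Hx. subst x y. rewrite P_even. reflexivity.
    + assert (E' : (k - j = 1)%Z) by lia. rewrite E' in Hx; simpl in Hx.
      left. rewrite cand_hi_t by lra. assert (x = 1 - u) by lra. clear Hx. subst x y. reflexivity.
Qed.

Lemma piece_sign k phi a b c (j : Z) : a <= b -> piece X2 Y2 k phi a b ->
  (forall u, a <= u <= b -> PH (phi u) (u + c)) ->
  forall u1 u2, a <= u1 <= b -> a <= u2 <= b ->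
  IZR j < u1 + c < IZR j + 1 -> IZR j < u2 + c < IZR j + 1 ->
  0 < fst (phi u1) -> 0 < fst (phi u2).
Proof.
  intros Hab Hp HP u1 u2 Hu1 Hu2 Hj1 Hj2 Hpos.
  destruct (piece_arc k phi a b Hab Hp u1 Hu1 (PH_Lambda _ _ (HP u1 Hu1))) as [sg [[->| ->] Ha]];
  destruct (Ha u1 Hu1) as [_ [_ Hy1]]; destruct (Ha u2 Hu2) as [_ [Hx2 _]].
  - rewrite Rmult_1_l in Hy1. destruct (PH_upper _ _ (HP u1 Hu1) Hy1) as [K HK].
    assert (IZR K < IZR j + 1) by lra. pose proof (int_lt_succ _ _ H). lra.
  - assert (Hy1' : snd (phi u1) = - P (fst (phi u1))) by lra.
    destruct (PH_lower _ _ (HP u1 Hu1) Hy1') as [K HK].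
    assert (IZR j < IZR K) by lra. pose proof (int_gt _ _ H). lra.
Qed.

Lemma local_sign phi p a b c (j : Z) : local_traj X2 Y2 phi p a b ->
  (forall u, a <= u <= b -> PH (phi u) (u + c)) ->
  forall u1 u2, a <= u1 <= b -> a <= u2 <= b ->
  IZR j < u1 + c < IZR j + 1 -> IZR j < u2 + c < IZR j + 1 ->
  0 < fst (phi u1) -> 0 < fst (phi u2).
Proof.
  intros [Ha [H0 [[Hsing Hconst]|[Hns [k1 [k2 [Hp1 [Hp2 _]]]]]]]] HP u1 u2 Hu1 Hu2 Hj1 Hj2 Hpos.
  - exfalso. apply (not_singular p); auto. rewrite <- H0. eapply PH_Lambda. apply HP. lra.
  - assert (Ha0 : a <= 0) by lra. assert (H0b : 0 <= b) by lra.
    assert (HP1 : forall u, a <= u <= 0 -> PH (phi u) (u + c)) by (intros; apply HP; lra).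
    assert (HP2 : forall u, 0 <= u <= b -> PH (phi u) (u + c)) by (intros; apply HP; lra).
    destruct (Rle_dec u1 0); destruct (Rle_dec u2 0).
    + apply (piece_sign k1 phi a 0 c j Ha0 Hp1 HP1 u1 u2); auto; lra.
    + assert (0 < fst (phi 0)) by (apply (piece_sign k1 phi a 0 c j Ha0 Hp1 HP1 u1 0); auto; lra).
      apply (piece_sign k2 phi 0 b c j H0b Hp2 HP2 0 u2); auto; lra.
    + assert (0 < fst (phi 0)) by (apply (piece_sign k2 phi 0 b c j H0b Hp2 HP2 u1 0); auto; lra).
      apply (piece_sign k1 phi a 0 c j Ha0 Hp1 HP1 0 u2); auto; lra.
    + apply (piece_sign k2 phi 0 b c j H0b Hp2 HP2 u1 u2); auto; lra.
Qed.

Lemma global_sign gamma : global_traj X2 Y2 gamma -> (forall w, PH (gamma w) w) ->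
  forall (j : Z) w1 w2, IZR j < w1 < IZR j + 1 -> IZR j < w2 < IZR j + 1 ->
  0 < fst (gamma w1) -> 0 < fst (gamma w2).
Proof.
  intros Hg HP j w1 w2 Hw1 Hw2 Hpos.
  destruct Hg as [tt [sigma [Hinc [Hup [Hdown [Hloc [Hj Heq]]]]]]].
  apply (chain_any tt Hinc Hup Hdown (fun w => 0 < fst (gamma w)) (Rmin w1 w2) (Rmax w1 w2))
    with (w0 := w1).
  - intros i a b Ha Hb Ha' Hb' Ga.
    assert (Hmin : IZR j < Rmin w1 w2) by (apply Rmin_glb_lt; lra).
    assert (Hmax : Rmax w1 w2 < IZR j + 1) by (apply Rmax_lub_lt; lra).
    destruct (Hloc i) as [tau [Htau HL]].
    assert (K := local_sign _ _ _ _ tau j HL).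
    cbv beta in K.
    assert (HPl : forall u, tt i - tau <= u <= tt (i + 1)%Z - tau -> PH (sigma i (u + tau)) (u + tau)).
    { intros u Hu. rewrite <- (Heq i) by lra. apply HP. }
    specialize (K HPl (a - tau) (b - tau) ltac:(lra) ltac:(lra) ltac:(lra) ltac:(lra)).
    replace (a - tau + tau) with a in K by ring. replace (b - tau + tau) with b in K by ring.
    rewrite <- !(Heq i) in K by auto. auto.
  - split; [apply Rmin_l|apply Rmax_l].
  - auto.
  - split; [apply Rmin_r|apply Rmax_r].
Qed.

Lemma PH_origin : PH origin 0.
Proof.
  split. split. simpl; lra. left. simpl. rewrite P0; auto.
  left. split. simpl; rewrite P0; auto. exists 0%Z. simpl; ring.
Qed.

Lemma I1_origin : ~ I1 origin.
Proof. unfold I1, origin; simpl; lra. Qed.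

Lemma orig_char gamma : Omega2 gamma -> gamma 0 = origin ->
  forall (j : Z) u, 0 <= u <= 1 -> gamma (IZR j + u) = cand (itin gamma j) u.
Proof.
  intros [Hg _] H0.
  assert (HP : forall w, PH (gamma w) w).
  { intros w. eapply PH_eq; [|apply (global_PH gamma Hg 0 0); rewrite H0; apply PH_origin]. ring. }
  assert (Hint : forall j:Z, gamma (IZR j) = origin).
  { intros j. destruct (PH_cand (gamma (IZR j)) j 0) as [E|E].
    rewrite Rplus_0_r; auto. lra. all: rewrite E; apply cand_0. }
  assert (Hitin : forall j, itin gamma j = true <-> 0 < fst (gamma (IZR j + 1/2))).
  { intros j. unfold itin. destruct excluded_middle_informative as [Hi|Hi].
    - split; auto. intros _. destruct Hi as [Hi|[_ Hi]].
      rewrite Hint in Hi. destruct (I1_origin Hi). destruct Hi; lra.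
    - split; intros Hc. discriminate. exfalso. apply Hi. right. split; auto.
      destruct (PH_cand (gamma (IZR j + 1/2)) j (1/2) (HP _) ltac:(lra)) as [E|E]; rewrite E in *.
      + rewrite cand_lo_t by lra. split. simpl; lra. left. reflexivity.
      + rewrite cand_lo_f in Hc by lra. simpl in Hc. lra. }
  intros j u Hu.
  destruct (Req_dec u 0) as [->|Hu0]. { rewrite Rplus_0_r, Hint, cand_0; auto. }
  destruct (Req_dec u 1) as [->|Hu1].
  { replace (IZR j + 1) with (IZR (j+1)) by (rewrite plus_IZR; auto). rewrite Hint, cand_1; auto. }
  assert (Hw : IZR j < IZR j + u < IZR j + 1) by lra.
  assert (Hh : IZR j < IZR j + 1/2 < IZR j + 1) by lra.
  destruct (PH_cand _ j u (HP _) Hu) as [E|E]; destruct (itin gamma j) eqn:Hb; auto.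
  - exfalso. assert (0 < fst (gamma (IZR j + u))) by (rewrite E; apply cand_pos_t; lra).
    assert (0 < fst (gamma (IZR j + 1/2))) by (apply (global_sign gamma Hg HP j (IZR j + u)); auto).
    apply Hitin in H1. congruence.
  - exfalso. assert (0 < fst (gamma (IZR j + 1/2))) by (apply Hitin; auto).
    assert (0 < fst (gamma (IZR j + u))) by (apply (global_sign gamma Hg HP j (IZR j + 1/2)); auto).
    rewrite E in H1. pose proof (cand_neg_f u ltac:(lra)). lra.
Qed.

Lemma dist2_le p q : dist2 p q <= Rabs (fst p - fst q) + Rabs (snd p - snd q).
Proof.
  unfold dist2. set (a := fst p - fst q). set (b := snd p - snd q).
  pose proof (Rabs_pos a). pose proof (Rabs_pos b).
  rewrite <- (sqrt_pow2 (Rabs a + Rabs b)) by lra. apply sqrt_le_1_alt.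
  replace ((Rabs a + Rabs b)^2) with (Rabs a ^2 + Rabs b^2 + 2 * Rabs a * Rabs b) by ring.
  rewrite !pow2_abs. nra.
Qed.

Lemma P_lip x y : -1/2 <= x <= 1/2 -> -1/2 <= y <= 1/2 -> Rabs (P x - P y) <= Rabs (x - y).
Proof.
  intros Hx Hy.
  replace (P x - P y) with ((x - y) * ((x + y) * (1/4 - x*x - y*y))) by (unfold P; field).
  rewrite Rabs_mult. rewrite <- (Rmult_1_r (Rabs (x - y))) at 2. apply Rmult_le_compat_l. apply Rabs_pos.
  rewrite Rabs_mult.
  assert (Rabs (x+y) <= 1) by (split_Rabs; lra).
  assert (Rabs (1/4 - x*x - y*y) <= 1) by (split_Rabs; nra).
  pose proof (Rabs_pos (x+y)). pose proof (Rabs_pos (1/4 - x*x - y*y)). nra.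
Qed.

Lemma arc_solves (W : vf) (g : R -> pt) sg c a b tau :
  (sg = 1 \/ sg = -1) -> (forall p, fst (W p) = sg) -> (forall p, snd (W p) = fst p / 2 - 4 * fst p ^ 3) ->
  (forall s, a + tau <= s <= b + tau -> g s = (c + sg * s, sg * P (c + sg * s))) ->
  (forall s, a + tau <= s <= b + tau -> -1/2 <= c + sg * s <= 1/2) ->
  solves W (fun s => g (s + tau)) a b.
Proof.
  intros Hsg HW1 HW2 Hg Hb. split.
  - intros t Ht eps Heps. exists (eps / 2). split. lra.
    intros s Hs Hst. eapply Rle_lt_trans. apply dist2_le.
    rewrite !Hg by lra. cbn [fst snd].
    assert (E1 : Rabs (c + sg * (s + tau) - (c + sg * (t + tau))) = Rabs (s - t)).
    { destruct Hsg as [-> | ->]; [f_equal; ring|]. rewrite <- Rabs_Ropp. f_equal; ring. }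
    assert (E2 : Rabs (sg * P (c + sg * (s + tau)) - sg * P (c + sg * (t + tau))) <= Rabs (s - t)).
    { rewrite <- Rmult_minus_distr_l, Rabs_mult. rewrite <- E1.
      replace (Rabs sg) with 1 by (destruct Hsg as [-> | ->]; split_Rabs; lra).
      rewrite Rmult_1_l. apply P_lip; apply Hb; lra. }
    lra.
  - intros t Ht. split.
    + apply (is_derive_ext_loc (fun s => c + sg * (s + tau))).
      * apply (filter_imp (fun s => a < s < b)). 2: apply loc_in; auto.
        intros s Hs. rewrite Hg by lra. reflexivity.
      * rewrite HW1. auto_derive; auto; ring.
    + apply (is_derive_ext_loc (fun s => sg * P (c + sg * (s + tau)))).
      * apply (filter_imp (fun s => a < s < b)). 2: apply loc_in; auto.
        intros s Hs. rewrite Hg by lra. reflexivity.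
      * rewrite HW2. rewrite Hg by lra. cbn [fst]. unfold P.
        destruct Hsg as [-> | ->]; auto_derive; auto; field.
Qed.

Lemma P_quarter : P (1/4) <> 0.
Proof. unfold P. intro H. field_simplify in H. lra. Qed.
Lemma P_mquarter : P (-(1/4)) <> 0.
Proof. rewrite P_even. apply P_quarter. Qed.

Lemma arc_local (g : R -> pt) A B sg c :
  A < B -> (sg = 1 \/ sg = -1) ->
  (forall s, A <= s <= B -> g s = (c + sg * s, sg * P (c + sg * s))) ->
  (forall s, A <= s <= B -> -1/2 <= c + sg * s <= 1/2) ->
  (c + sg * ((A + B) / 2) = 1/4 \/ c + sg * ((A + B) / 2) = -(1/4)) ->
  local_traj X2 Y2 (fun s => g (s + (A + B) / 2)) (g ((A + B) / 2)) (A - (A + B) / 2) (B - (A + B) / 2).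
Proof.
  intros HAB Hsg Hg Hb Hmid. set (tau := (A + B) / 2) in *.
  assert (Htau : A <= tau <= B) by (unfold tau; lra).
  assert (Hsnd : snd (g tau) = sg * P (c + sg * tau)) by (rewrite Hg; auto).
  assert (HPn : P (c + sg * tau) <> 0) by (destruct Hmid as [-> | ->]; [apply P_quarter|apply P_mquarter]).
  assert (HPp : 0 < P (c + sg * tau)).
  { pose proof (P_bound_nonneg _ (Hb tau Htau)). lra. }
  split. lra. split. f_equal; ring. right. split.
  - intros [[Hs _] _]. unfold onSigma in Hs. rewrite Hsnd in Hs.
    destruct Hsg as [-> | ->]; lra.
  - assert (Hg' : forall s, (A - tau) + tau <= s <= (B - tau) + tau -> g s = (c + sg * s, sg * P (c + sg * s))).
    { intros s Hs. apply Hg. lra. }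
    assert (Hb' : forall s, (A - tau) + tau <= s <= (B - tau) + tau -> -1/2 <= c + sg * s <= 1/2).
    { intros s Hs. apply Hb. lra. }
    destruct Hsg as [Hs1 | Hs1].
    + exists KX, KX. split; [|split].
      * split. apply (arc_solves X2 g sg c (A - tau) 0 tau); auto; try (intros; reflexivity);
          [intros; apply Hg'; lra | intros; apply Hb'; lra].
        intros t Ht. rewrite Hg by lra. cbn [snd]. subst sg. rewrite Rmult_1_l.
        apply P_bound_nonneg. apply Hb. lra.
      * split. apply (arc_solves X2 g sg c 0 (B - tau) tau); auto; try (intros; reflexivity);
          [intros; apply Hg'; lra | intros; apply Hb'; lra].
        intros t Ht. rewrite Hg by lra. cbn [snd]. subst sg. rewrite Rmult_1_l.
        apply P_bound_nonneg. apply Hb. lra.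
      * left. split; auto. rewrite Hsnd. subst sg. lra.
    + exists KY, KY. split; [|split].
      * split. apply (arc_solves Y2 g sg c (A - tau) 0 tau); auto; try (intros; reflexivity);
          [intros; apply Hg'; lra | intros; apply Hb'; lra].
        intros t Ht. rewrite Hg by lra. cbn [snd]. subst sg.
        pose proof (P_bound_nonneg _ (Hb (t + tau) ltac:(lra))). lra.
      * split. apply (arc_solves Y2 g sg c 0 (B - tau) tau); auto; try (intros; reflexivity);
          [intros; apply Hg'; lra | intros; apply Hb'; lra].
        intros t Ht. rewrite Hg by lra. cbn [snd]. subst sg.
        pose proof (P_bound_nonneg _ (Hb (t + tau) ltac:(lra))). lra.
      * right. left. split; auto. rewrite Hsnd. subst sg. lra.
Qed.

Definition gam (a : Z -> bool) (t : R) : pt := cand (a (Int_part t)) (t - IZR (Int_part t)).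

Lemma Int_part_eq (j : Z) t : IZR j <= t < IZR j + 1 -> Int_part t = j.
Proof.
  intros H. destruct (base_Int_part t) as [H1 H2].
  assert (Int_part t < j + 1)%Z by (apply lt_IZR; rewrite plus_IZR; simpl; lra).
  assert (j < Int_part t + 1)%Z by (apply lt_IZR; rewrite plus_IZR; simpl; lra). lia.
Qed.

Lemma gam_on a (j : Z) u : 0 <= u <= 1 -> gam a (IZR j + u) = cand (a j) u.
Proof.
  intros Hu. destruct (Req_dec u 1) as [->|Hu1].
  - replace (IZR j + 1) with (IZR (j+1)) by (rewrite plus_IZR; auto).
    unfold gam. rewrite (Int_part_eq (j+1)) by lra.
    replace (IZR (j + 1) - IZR (j + 1)) with 0 by ring. rewrite cand_0, cand_1. auto.
  - unfold gam. rewrite (Int_part_eq j) by lra. f_equal. ring.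
Qed.

Lemma gam_at a (j : Z) s : IZR j <= s <= IZR j + 1 -> gam a s = cand (a j) (s - IZR j).
Proof. intros H. rewrite <- gam_on by lra. f_equal. ring. Qed.

Lemma gam_interval a (i : Z) : exists c sg, (sg = 1 \/ sg = -1) /\
  (forall s, IZR i / 2 <= s <= IZR (i+1) / 2 -> gam a s = (c + sg * s, sg * P (c + sg * s))) /\
  (forall s, IZR i / 2 <= s <= IZR (i+1) / 2 -> -1/2 <= c + sg * s <= 1/2) /\
  (c + sg * ((IZR i / 2 + IZR (i+1) / 2) / 2) = 1/4 \/ c + sg * ((IZR i / 2 + IZR (i+1) / 2) / 2) = -(1/4)).
Proof.
  pose proof (Z.div_mod i 2 ltac:(lia)) as Hdm.
  pose proof (Z.mod_pos_bound i 2 ltac:(lia)) as Hb.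
  set (j := (i / 2)%Z) in *.
  rewrite plus_IZR. simpl (IZR 1).
  assert (E : (i mod 2 = 0 \/ i mod 2 = 1)%Z) by lia.
  destruct E as [E|E]; rewrite E in Hdm.
  - assert (Hi : IZR i = 2 * IZR j) by (rewrite Hdm, plus_IZR, mult_IZR; simpl; ring).
    rewrite Hi. destruct (a j) eqn:Ha.
    + exists (- IZR j), 1. split; [left; auto|]. split; [|split].
      * intros s Hs. rewrite (gam_at a j) by lra. rewrite Ha, cand_lo_t by lra.
        f_equal; [ring|]. rewrite Rmult_1_l. f_equal. ring.
      * intros s Hs. lra.
      * left. field.
    + exists (IZR j), (-1). split; [right; auto|]. split; [|split].
      * intros s Hs. rewrite (gam_at a j) by lra. rewrite Ha, cand_lo_f by lra.
        f_equal; [ring|]. replace (IZR j + -1 * s) with (- (s - IZR j)) by ring. rewrite P_even. ring.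
      * intros s Hs. lra.
      * right. field.
  - assert (Hi : IZR i = 2 * IZR j + 1) by (rewrite Hdm, plus_IZR, mult_IZR; simpl; ring).
    rewrite Hi. destruct (a j) eqn:Ha.
    + exists (IZR j + 1), (-1). split; [right; auto|]. split; [|split].
      * intros s Hs. rewrite (gam_at a j) by lra. rewrite Ha, cand_hi_t by lra.
        f_equal; [ring|]. replace (IZR j + 1 + -1 * s) with (1 - (s - IZR j)) by ring. ring.
      * intros s Hs. lra.
      * left. field.
    + exists (- IZR j - 1), 1. split; [left; auto|]. split; [|split].
      * intros s Hs. rewrite (gam_at a j) by lra. rewrite Ha, cand_hi_f by lra.
        f_equal; [ring|]. rewrite Rmult_1_l. f_equal. ring.
      * intros s Hs. lra.
      * right. field.
Qed.

Lemma gam_global a : global_traj X2 Y2 (gam a).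
Proof.
  exists (fun i => IZR i / 2), (fun _ => gam a). split; [|split; [|split; [|split; [|split]]]].
  - intros i. rewrite plus_IZR. simpl. lra.
  - intros M. exists (up (2*M)). destruct (archimed (2*M)). lra.
  - intros M. exists (- up (-2*M))%Z. rewrite opp_IZR. destruct (archimed (-2*M)). lra.
  - intros i. destruct (gam_interval a i) as [c [sg [Hsg [Hg [Hb Hm]]]]].
    exists ((IZR i / 2 + IZR (i+1) / 2) / 2).
    assert (IZR i / 2 < IZR (i+1) / 2) by (rewrite plus_IZR; simpl; lra).
    split. lra.
    apply (arc_local (gam a) _ _ sg c); auto.
  - intros i. reflexivity.
  - intros i s _. reflexivity.
Qed.

Lemma gam_0 a : gam a 0 = origin.
Proof. replace 0 with (IZR 0 + 0) by (simpl; ring). rewrite gam_on by lra. apply cand_0. Qed.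

Lemma Lambda_origin : Lambda2 origin.
Proof. split. simpl; lra. left. simpl. rewrite P0; auto. Qed.

Lemma gam_Omega a : Omega2 (gam a).
Proof. split. apply gam_global. rewrite gam_0. apply Lambda_origin. Qed.

Lemma itin_gam a : itin (gam a) = a.
Proof.
  apply functional_extensionality. intros j.
  pose proof (orig_char (gam a) (gam_Omega a) (gam_0 a) j (1/2) ltac:(lra)) as H.
  rewrite gam_on in H by lra.
  destruct (a j), (itin (gam a) j); auto;
  rewrite cand_lo_t, cand_lo_f in H by lra; injection H; intros; lra.
Qed.

Lemma rep0_spec (c : OmegaBar) : proj1_sig c (rep0 c) /\ rep0 c 0 = origin.
Proof.
  unfold rep0. apply epsilon_spec. destruct c as [S [g [Hg ->]]]. simpl.
  exists (gam (itin g)). split. split. apply gam_Omega. rewrite itin_gam; auto. apply gam_0.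
Qed.

Lemma mem_itin (c : OmegaBar) g1 g2 : proj1_sig c g1 -> proj1_sig c g2 -> itin g1 = itin g2.
Proof. destruct c as [S [g [Hg ->]]]; simpl; intros [_ H1] [_ H2]; congruence. Qed.

Lemma mem_Omega (c : OmegaBar) g : proj1_sig c g -> Omega2 g.
Proof. destruct c as [S [g0 [Hg ->]]]; simpl; intros [H _]; auto. Qed.

Definition hh (c : OmegaBar) : Z -> bool := itin (rep0 c).

Definition gg (a : Z -> bool) : OmegaBar :=
  exist _ (cls (gam a)) (ex_intro _ (gam a) (conj (gam_Omega a) eq_refl)).

Lemma hh_mem (c : OmegaBar) g : proj1_sig c g -> hh c = itin g.
Proof. intros H. unfold hh. apply (mem_itin c); auto. apply rep0_spec. Qed.

Lemma gg_hh c : gg (hh c) = c.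
Proof.
  apply eq_sig_hprop. intros; apply proof_irrelevance.
  destruct c as [S [g [Hg ->]]] eqn:Ec. simpl.
  assert (Hm : proj1_sig c g) by (rewrite Ec; simpl; split; auto).
  rewrite <- Ec. rewrite (hh_mem c g Hm).
  unfold cls. rewrite itin_gam. reflexivity.
Qed.

Lemma hh_gg a : hh (gg a) = a.
Proof.
  rewrite (hh_mem (gg a) (gam a)). apply itin_gam. simpl. split. apply gam_Omega. auto.
Qed.

Lemma T1_global gamma : global_traj X2 Y2 gamma -> global_traj X2 Y2 (T1 gamma).
Proof.
  intros [tt [sigma [Hinc [Hup [Hdown [Hloc [Hj Heq]]]]]]].
  exists (fun i => tt i - 1), (fun i s => sigma i (s + 1)).
  split; [|split; [|split; [|split; [|split]]]].
  - intros i. specialize (Hinc i). lra.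
  - intros M. destruct (Hup (M + 1)) as [i Hi]. exists i. lra.
  - intros M. destruct (Hdown (M + 1)) as [i Hi]. exists i. lra.
  - intros i. destruct (Hloc i) as [tau [Htau HL]]. exists (tau - 1). split. lra.
    replace (fun s => sigma i (s + (tau - 1) + 1)) with (fun s => sigma i (s + tau))
      by (apply functional_extensionality; intros s; f_equal; ring).
    replace (tau - 1 + 1) with tau by ring.
    replace (tt i - 1 - (tau - 1)) with (tt i - tau) by ring.
    replace (tt (i + 1)%Z - 1 - (tau - 1)) with (tt (i + 1)%Z - tau) by ring. auto.
  - intros i. simpl. replace (tt (i + 1)%Z - 1 + 1) with (tt (i + 1)%Z) by ring. auto.
  - intros i s Hs. unfold T1. apply Heq. lra.
Qed.

Lemma T1_Omega gamma : Omega2 gamma -> Omega2 (T1 gamma).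
Proof.
  intros [Hg H0]. split. apply T1_global; auto. unfold T1. rewrite Rplus_0_l.
  apply (invariance gamma Hg H0 1).
Qed.

Lemma itin_T1 gamma : itin (T1 gamma) = shift2 (itin gamma).
Proof.
  apply functional_extensionality. intros j. unfold itin, shift2, T1.
  replace (IZR (j + 1)) with (IZR j + 1) by (rewrite plus_IZR; auto).
  replace (IZR j + 1 / 2 + 1) with (IZR j + 1 + 1 / 2) by ring. reflexivity.
Qed.

Lemma conj_prop : forall (c : OmegaBar) (gamma : R -> pt), proj1_sig c gamma ->
  exists c' : OmegaBar, proj1_sig c' (T1 gamma) /\ hh c' = shift2 (hh c).
Proof.
  intros c gamma Hm. exists (gg (shift2 (hh c))). split.
  - simpl. split. apply T1_Omega. apply (mem_Omega c); auto.
    rewrite itin_T1, itin_gam. rewrite (hh_mem c gamma Hm). auto.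
  - apply hh_gg.
Qed.

Definition Lobe (b : bool) : pt -> Prop := fun p => exists u, 0 <= u <= 1 /\ p = cand b u.

Lemma img_lobe gamma (i : Z) : Omega2 gamma -> gamma 0 = origin -> img gamma i = Lobe (itin gamma i).
Proof.
  intros HO H0. apply functional_extensionality. intros p. apply propositional_extensionality.
  split.
  - intros [s [Hs ->]]. exists (s - IZR i). split. lra.
    rewrite <- (orig_char gamma HO H0 i) by lra. f_equal. ring.
  - intros [u [Hu ->]]. exists (IZR i + u). split. lra. rewrite (orig_char gamma HO H0 i); auto.
Qed.

Lemma dterm_eq c1 c2 i : dterm c1 c2 i = dH (Lobe (hh c1 i)) (Lobe (hh c2 i)).
Proof.
  unfold dterm, hh. destruct (rep0_spec c1) as [M1 O1]. destruct (rep0_spec c2) as [M2 O2].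
  rewrite !img_lobe; auto; eapply mem_Omega; eauto.
Qed.

Lemma glb_facts (E : R -> Prop) e m : E e -> (forall x, E x -> m <= x) ->
  m <= real (Glb_Rbar E) <= e.
Proof.
  intros He Hm. destruct (Glb_Rbar_correct E) as [Hlb Hglb].
  specialize (Hlb e He). assert (Hm' : Rbar_le m (Glb_Rbar E)) by (apply Hglb; intros x Hx; apply Hm; auto).
  destruct (Glb_Rbar E); simpl in *; try contradiction; lra.
Qed.

Lemma lub_facts (E : R -> Prop) e M : E e -> (forall x, E x -> x <= M) ->
  e <= real (Lub_Rbar E) <= M.
Proof.
  intros He Hm. destruct (Lub_Rbar_correct E) as [Hub Hlub].
  specialize (Hub e He). assert (Hm' : Rbar_le (Lub_Rbar E) M) by (apply Hlub; intros x Hx; apply Hm; auto).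
  destruct (Lub_Rbar E); simpl in *; try contradiction; lra.
Qed.

Lemma dist2_pos p q : 0 <= dist2 p q.
Proof. apply sqrt_pos. Qed.
Lemma dist2_refl p : dist2 p p = 0.
Proof. unfold dist2. replace ((fst p - fst p) ^ 2 + (snd p - snd p) ^ 2) with 0 by ring. apply sqrt_0. Qed.

Lemma dpt_le p (B : pt -> Prop) b : B b -> 0 <= dpt p B <= dist2 p b.
Proof.
  intros Hb. unfold dpt. apply glb_facts. exists b; auto.
  intros x [b' [_ ->]]. apply dist2_pos.
Qed.

Lemma dpt_ge p (B : pt -> Prop) b m : B b -> (forall b', B b' -> m <= dist2 p b') -> m <= dpt p B.
Proof.
  intros Hb Hm. unfold dpt. eapply glb_facts. exists b; eauto.
  intros x [b' [Hb' ->]]. auto.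
Qed.

Lemma hsemi_facts (A B : pt -> Prop) a M : A a -> (forall a', A a' -> dpt a' B <= M) ->
  dpt a B <= hsemi A B <= M.
Proof.
  intros Ha HM. unfold hsemi. apply lub_facts. exists a; auto.
  intros x [a' [Ha' ->]]. auto.
Qed.

Lemma Lobe_Lambda b p : Lobe b p -> -1/2 <= fst p <= 1/2 /\ -1 <= snd p <= 1.
Proof.
  intros [u [Hu ->]].
  assert (HP : forall x, -1/2 <= x <= 1/2 -> 0 <= P x <= 1).
  { intros x Hx. split. apply P_bound_nonneg; auto. unfold P. nra. }
  destruct b; destruct (Rle_dec u (1/2));
  [rewrite cand_lo_t|rewrite cand_hi_t|rewrite cand_lo_f|rewrite cand_hi_f]; try lra; simpl;
  match goal with |- context [P ?x] => pose proof (HP x ltac:(lra)) end; lra.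
Qed.

Lemma Lobe_dist b1 b2 p q : Lobe b1 p -> Lobe b2 q -> dist2 p q <= 3.
Proof.
  intros Hp Hq. destruct (Lobe_Lambda _ _ Hp). destruct (Lobe_Lambda _ _ Hq).
  eapply Rle_trans. apply dist2_le. split_Rabs; lra.
Qed.

Lemma Lobe_ne b : Lobe b (cand b 0).
Proof. exists 0. split; [lra|auto]. Qed.

Lemma dH_bounds b1 b2 : 0 <= dH (Lobe b1) (Lobe b2) <= 3.
Proof.
  assert (K : forall b1 b2, 0 <= hsemi (Lobe b1) (Lobe b2) <= 3).
  { intros c1 c2.
    assert (H := hsemi_facts (Lobe c1) (Lobe c2) (cand c1 0) 3 (Lobe_ne c1)).
    assert (H' : forall a', Lobe c1 a' -> dpt a' (Lobe c2) <= 3).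
    { intros a' Ha'. eapply Rle_trans. apply (dpt_le _ _ (cand c2 0) (Lobe_ne c2)).
      apply (Lobe_dist c1 c2); auto. apply Lobe_ne. }
    specialize (H H'). pose proof (dpt_le (cand c1 0) (Lobe c2) _ (Lobe_ne c2)). lra. }
  unfold dH. pose proof (K b1 b2). pose proof (K b2 b1).
  unfold Rmax; destruct Rle_dec; lra.
Qed.

Lemma dH_self b : dH (Lobe b) (Lobe b) = 0.
Proof.
  assert (H : hsemi (Lobe b) (Lobe b) = 0).
  { assert (H0 : forall a', Lobe b a' -> dpt a' (Lobe b) = 0).
    { intros a' Ha'. pose proof (dpt_le a' (Lobe b) a' Ha'). rewrite dist2_refl in H. lra. }
    assert (H := hsemi_facts (Lobe b) (Lobe b) (cand b 0) 0 (Lobe_ne b)).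
    rewrite H0 in H by apply Lobe_ne.
    assert (forall a', Lobe b a' -> dpt a' (Lobe b) <= 0) by (intros; rewrite H0; auto; lra).
    specialize (H H1). lra. }
  unfold dH. rewrite H. unfold Rmax; destruct Rle_dec; lra.
Qed.

Lemma dH_diff b1 b2 : b1 <> b2 -> 1/2 <= dH (Lobe b1) (Lobe b2).
Proof.
  assert (K : 1/2 <= hsemi (Lobe true) (Lobe false)).
  { assert (Ha : Lobe true (cand true (1/2))) by (exists (1/2); split; [lra|auto]).
    assert (H := hsemi_facts (Lobe true) (Lobe false) _ 3 Ha).
    assert (H' : forall a', Lobe true a' -> dpt a' (Lobe false) <= 3).
    { intros a' Ha'. eapply Rle_trans. apply (dpt_le _ _ (cand false 0) (Lobe_ne false)).
      apply (Lobe_dist true false); auto. apply Lobe_ne. }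
    specialize (H H').
    assert (1/2 <= dpt (cand true (1/2)) (Lobe false)).
    { apply (dpt_ge _ _ (cand false 0)). apply Lobe_ne.
      intros b' [u [Hu ->]]. eapply Rle_trans; [|apply fst_le_dist].
      rewrite cand_lo_t by lra. cbn [fst].
      destruct (Rle_dec u (1/2)); [rewrite cand_lo_f|rewrite cand_hi_f]; try lra; simpl; split_Rabs; lra. }
    lra. }
  intros Hne. unfold dH. destruct b1, b2; try congruence.
  - eapply Rle_trans; [exact K|apply Rmax_l].
  - eapply Rle_trans; [exact K|apply Rmax_r].
Qed.

Lemma dterm_bounds c1 c2 i : 0 <= dterm c1 c2 i <= 3.
Proof. rewrite dterm_eq. apply dH_bounds. Qed.

Lemma half_pow_bounds n : 0 < (/2)^n <= 1.
Proof. induction n; simpl; [lra|]. split; [apply Rmult_lt_0_compat; lra|nra]. Qed.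

Lemma half_pow_le m n : (m <= n)%nat -> (/2)^n <= (/2)^m.
Proof.
  intros H. replace n with (m + (n - m))%nat by lia. rewrite pow_add.
  pose proof (half_pow_bounds m). pose proof (half_pow_bounds (n - m)). nra.
Qed.

Lemma ser_ex (a : nat -> R) C : (forall n, 0 <= a n <= C * (/2)^n) -> ex_series a.
Proof.
  intros H. apply (ex_series_le a (fun n => C * (/2)^n)).
  - intros n. change (norm (a n)) with (Rabs (a n)). rewrite Rabs_pos_eq; apply H.
  - apply (ex_series_scal_l C (fun n => (/2)^n)). apply ex_series_geom. rewrite Rabs_pos_eq; lra.
Qed.

Lemma ser_nonneg (a : nat -> R) : ex_series a -> (forall n, 0 <= a n) -> 0 <= Series a.
Proof.
  intros He H. assert (E : Series (fun n => 0 * a n) = 0) by (rewrite Series_scal_l; ring).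
  rewrite <- E. apply Series_le; auto. intros n; split; [lra|]. rewrite Rmult_0_l; auto.
Qed.

Lemma ser_ge_term : forall k (a : nat -> R), ex_series a -> (forall n, 0 <= a n) -> a k <= Series a.
Proof.
  induction k; intros a He H; rewrite Series_incr_1 by auto.
  - pose proof (ser_nonneg (fun k => a (S k)) (proj1 (ex_series_incr_1 a) He) (fun n => H (S n))). lra.
  - pose proof (IHk (fun k => a (S k)) (proj1 (ex_series_incr_1 a) He) (fun n => H (S n))).
    pose proof (H 0%nat). simpl in *. lra.
Qed.

Lemma ser_tail : forall M (a : nat -> R) C, (forall n, 0 <= a n <= C * (/2)^n) ->
  (forall n, (n < M)%nat -> a n = 0) -> Series a <= 2 * C * (/2)^M.
Proof.
  induction M; intros a C H Hz.
  - simpl. rewrite Rmult_1_r.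
    assert (E : Series (fun n => C * (/2)^n) = 2 * C).
    { rewrite Series_scal_l, Series_geom. field. rewrite Rabs_pos_eq; lra. }
    rewrite <- E. apply Series_le; auto.
    apply (ex_series_scal_l C (fun n => (/2)^n)). apply ex_series_geom. rewrite Rabs_pos_eq; lra.
  - rewrite Series_incr_1 by (apply (ser_ex a C); auto).
    rewrite Hz by lia. rewrite Rplus_0_l.
    assert (K := IHM (fun k => a (S k)) (C * /2)).
    simpl in *. 
    assert (H' : forall n, 0 <= a (S n) <= C * / 2 * (/ 2) ^ n).
    { intros n. specialize (H (S n)). simpl in H. lra. }
    specialize (K H'). assert (forall n, (n < M)%nat -> a (S n) = 0) by (intros; apply Hz; lia).
    specialize (K H0). lra.
Qed.

Definition t1 c1 c2 n := (/2)^n * dterm c1 c2 (Z.of_nat n).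
Definition t2 c1 c2 n := (/2)^(S n) * dterm c1 c2 (- Z.of_nat (S n)).

Lemma t1_bounds c1 c2 n : 0 <= t1 c1 c2 n <= 3 * (/2)^n.
Proof. unfold t1. pose proof (dterm_bounds c1 c2 (Z.of_nat n)). pose proof (half_pow_bounds n). nra. Qed.
Lemma t2_bounds c1 c2 n : 0 <= t2 c1 c2 n <= 3 * (/2)^n.
Proof.
  unfold t2. pose proof (dterm_bounds c1 c2 (- Z.of_nat (S n))). pose proof (half_pow_bounds (S n)).
  pose proof (half_pow_le n (S n) ltac:(lia)). nra.
Qed.

Lemma rho2_split c1 c2 : rho2 c1 c2 = Series (t1 c1 c2) + Series (t2 c1 c2).
Proof. reflexivity. Qed.

Lemma cont_hh : cont_to_seq hh.
Proof.
  intros c N. exists ((/2)^N * /2). split.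
  { pose proof (half_pow_bounds N). nra. }
  intros c' Hr j Hj.
  destruct (Bool.bool_dec (hh c' j) (hh c j)) as [E|E]; auto. exfalso.
  assert (Hd : 1/2 <= dterm c c' j) by (rewrite dterm_eq; apply dH_diff; auto).
  rewrite rho2_split in Hr.
  assert (E1 := ser_ex _ _ (t1_bounds c c')). assert (E2 := ser_ex _ _ (t2_bounds c c')).
  assert (N1 := ser_nonneg _ E1 (fun n => proj1 (t1_bounds c c' n))).
  assert (N2 := ser_nonneg _ E2 (fun n => proj1 (t2_bounds c c' n))).
  destruct (Z_le_dec 0 j) as [Hj0|Hj0].
  - set (n := Z.to_nat j). assert (Hn : j = Z.of_nat n) by (unfold n; lia).
    pose proof (ser_ge_term n _ E1 (fun n => proj1 (t1_bounds c c' n))).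
    change (t1 c c' n) with ((/2)^n * dterm c c' (Z.of_nat n)) in H. rewrite <- Hn in H.
    pose proof (half_pow_le n N ltac:(lia)). pose proof (half_pow_bounds N).
    assert ((/2)^N * /2 <= (/2)^n * dterm c c' j) by (assert (/2 = 1/2) by field; apply Rmult_le_compat; lra). lra.
  - set (n := (Z.to_nat (- j) - 1)%nat). assert (Hn : j = (- Z.of_nat (S n))%Z) by (unfold n; lia).
    pose proof (ser_ge_term n _ E2 (fun n => proj1 (t2_bounds c c' n))).
    change (t2 c c' n) with ((/2)^(S n) * dterm c c' (- Z.of_nat (S n))) in H. rewrite <- Hn in H.
    pose proof (half_pow_le (S n) N ltac:(lia)). pose proof (half_pow_bounds N).
    assert ((/2)^N * /2 <= (/2)^(S n) * dterm c c' j) by (assert (/2 = 1/2) by field; apply Rmult_le_compat; lra). lra.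
Qed.

Lemma cont_gg : cont_from_seq gg.
Proof.
  intros a eps Heps.
  destruct (pow_lt_1_zero (/2) ltac:(rewrite Rabs_pos_eq; lra) (eps / 10) ltac:(lra)) as [N HN].
  exists N. intros b Hb.
  specialize (HN N (le_n N)). rewrite Rabs_pos_eq in HN by (apply Rlt_le, half_pow_bounds).
  assert (Hz : forall j, (Z.abs j <= Z.of_nat N)%Z -> dterm (gg a) (gg b) j = 0).
  { intros j Hj. rewrite dterm_eq, !hh_gg, Hb by auto. apply dH_self. }
  rewrite rho2_split.
  assert (S1 : Series (t1 (gg a) (gg b)) <= 2 * 3 * (/2)^(S N)).
  { apply ser_tail. apply t1_bounds. intros n Hn. unfold t1. rewrite Hz by lia. ring. }
  assert (S2 : Series (t2 (gg a) (gg b)) <= 2 * 3 * (/2)^N).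
  { apply ser_tail. apply t2_bounds. intros n Hn. unfold t2. rewrite Hz by lia. ring. }
  replace (2 * 3 * (/2)^(S N)) with (3 * (/2)^N) in S1 by (simpl; field). lra.
Qed.

Definition fp (x : R) : pt := (x, P x).
Definition fm (x : R) : pt := (x, - P x).

Lemma fp_lip x y : -1/2 <= x <= 1/2 -> -1/2 <= y <= 1/2 -> dist2 (fp x) (fp y) <= 2 * Rabs (x - y).
Proof. intros. eapply Rle_trans. apply dist2_le. unfold fp; simpl. pose proof (P_lip x y H H0). lra. Qed.
Lemma fm_lip x y : -1/2 <= x <= 1/2 -> -1/2 <= y <= 1/2 -> dist2 (fm x) (fm y) <= 2 * Rabs (x - y).
Proof.
  intros. eapply Rle_trans. apply dist2_le. unfold fm; simpl. pose proof (P_lip x y H H0).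
  replace (- P x - - P y) with (- (P x - P y)) by ring. rewrite Rabs_Ropp. lra.
Qed.

Lemma compact_Lambda : compact2 Lambda2.
Proof.
  intros I U HU Hcov.
  set (a := -1/2). set (b := 1/2).
  assert (Loc : forall z, a <= z <= b -> exists d, 0 < d /\ exists i1 i2,
     forall y, Rabs (y - z) < d -> a <= y <= b -> U i1 (fp y) /\ U i2 (fm y)).
  { intros z Hz.
    destruct (Hcov (fp z)) as [i1 H1]. split; [unfold fp; simpl; auto|left; auto].
    destruct (Hcov (fm z)) as [i2 H2]. split; [unfold fm; simpl; auto|right; auto].
    destruct (HU i1 _ H1) as [e1 [He1 K1]]. destruct (HU i2 _ H2) as [e2 [He2 K2]].
    exists (Rmin (e1/2) (e2/2)). split. apply Rmin_glb_lt; lra.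
    exists i1, i2. intros y Hy Hyab.
    pose proof (Rmin_l (e1/2) (e2/2)). pose proof (Rmin_r (e1/2) (e2/2)).
    split.
    - apply K1. eapply Rle_lt_trans. apply fp_lip; unfold a, b in *; lra.
      rewrite Rabs_minus_sym. lra.
    - apply K2. eapply Rle_lt_trans. apply fm_lip; unfold a, b in *; lra.
      rewrite Rabs_minus_sym. lra. }
  set (Good := fun x => exists l : list I, forall y, a <= y <= x ->
      (exists i, In i l /\ U i (fp y)) /\ (exists i, In i l /\ U i (fm y))).
  set (E := fun x => a <= x <= b /\ Good x).
  assert (Ea : E a).
  { split. unfold a, b; lra.
    destruct (Loc a ltac:(unfold a, b; lra)) as [d [Hd [i1 [i2 K]]]].
    exists (i1 :: i2 :: nil). intros y Hy.
    assert (y = a) by lra. subst y.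
    destruct (K a ltac:(rewrite Rminus_diag, Rabs_R0; lra) ltac:(unfold a, b; lra)).
    split; [exists i1|exists i2]; split; simpl; auto. }
  destruct (completeness E) as [m [Hub Hlub]].
  { exists b. intros x [Hx _]. lra. }
  { exists a. auto. }
  assert (Ham : a <= m) by (apply Hub; auto).
  assert (Hmb : m <= b) by (apply Hlub; intros x [Hx _]; lra).
  destruct (Loc m ltac:(lra)) as [d [Hd [i1 [i2 K]]]].
  assert (Hx : exists x, E x /\ m - d < x).
  { apply NNPP. intro Hn. assert (m <= m - d).
    { apply Hlub. intros x Ex. destruct (Rle_dec x (m - d)); auto.
      exfalso. apply Hn. exists x. split; auto. lra. }
    lra. }
  destruct Hx as [x [[Hxab [l Hl]] Hxd]].
  assert (Hxm : x <= m) by (apply Hub; split; auto; exists l; auto).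
  set (z := Rmin b (m + d/2)).
  assert (Gz : Good z).
  { exists (i1 :: i2 :: l). intros y Hy.
    destruct (Rle_dec y x).
    - destruct (Hl y ltac:(lra)) as [[i [Hi Hi']] [i' [Hi2 Hi2']]].
      split; [exists i|exists i']; split; simpl; auto.
    - pose proof (Rmin_l b (m + d/2)). pose proof (Rmin_r b (m + d/2)).
      destruct (K y ltac:(split_Rabs; unfold z in *; lra) ltac:(unfold z in *; lra)).
      split; [exists i1|exists i2]; split; simpl; auto. }
  assert (Hz : z <= m).
  { apply Hub. split; auto. unfold z. split. pose proof (Rmin_glb b (m + d/2) a). apply H; lra. apply Rmin_l. }
  assert (Hmb' : m = b).
  { unfold z in Hz. unfold Rmin in Hz. destruct Rle_dec; lra. }
  assert (Hzb : z = b) by (unfold z; unfold Rmin; destruct Rle_dec; lra).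
  destruct Gz as [l' Hl']. exists l'. intros p [Hp Hpp].
  rewrite Hzb in Hl'. destruct (Hl' (fst p) Hp) as [[i [Hi Hi']] [i' [Hi2 Hi2']]].
  destruct Hpp as [Hpp|Hpp].
  - exists i. split; auto. replace p with (fp (fst p)); auto. unfold fp. rewrite <- Hpp. destruct p; auto.
  - exists i'. split; auto. replace p with (fm (fst p)); auto. unfold fm. rewrite <- Hpp. destruct p; auto.
Qed.

Theorem theoremA :
  compact2 Lambda2 /\ invariant X2 Y2 Lambda2 /\
  exists h : OmegaBar -> Z -> bool,
    homeomorphism h /\
    (forall (c : OmegaBar) (gamma : R -> pt), proj1_sig c gamma ->
       exists c' : OmegaBar, proj1_sig c' (T1 gamma) /\ h c' = shift2 (h c)).
Proof.
  split. apply compact_Lambda. split. apply invariance.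
  exists hh. split.
  - exists gg. split. intros; apply gg_hh. split. intros; apply hh_gg. split.
    apply cont_hh. apply cont_gg.
  - apply conj_prop.
Qed.
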